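(* Let $K$ be an imaginary quadratic field of class number $1$ with ring of integers $\mathcal{O}_K\subset\mathbb{C}$. Let $z_1,\dots,z_l\in\mathcal{O}_K$ with $\mathrm{Re}(z_j)\neq0$, and let $m_1,\dots,m_l,k$ be integers and $n\ge1$ an integer. If $$\frac{k\pi}{n}=\sum_{j=1}^{l}m_j\arctan\frac{\mathrm{Im}(z_j)}{\mathrm{Re}(z_j)},$$ then $\frac{k\pi}{n}=j\pi/4$ for some $j\in\mathbb{Z}$ if $K=\mathbb{Q}(\sqrt{-1})$, $\frac{k\pi}{n}=j\pi/6$ for some $j\in\mathbb{Z}$ if $K=\mathbb{Q}(\sqrt{-3})$, and $\frac{k\pi}{n}=j\pi/2$ for some $j\in\mathbb{Z}$ otherwise. *)

(* Defs.v *)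
From mathcomp Require Import all_boot all_algebra.
From mathcomp Require Export complex.
From mathcomp Require Export Rstruct.
From Stdlib Require Export Reals.
Import GRing.Theory Num.Theory.
Local Open Scope ring_scope.

Definition squarefree (d : nat) : Prop :=
  forall p : nat, (dvdn (p * p)%N d) -> p = 1%N.

Definition sqrt_neg (d : nat) : R[i] := Complex 0 (Num.sqrt (d%:R : R)).

Definition in_K (d : nat) (z : R[i]) : Prop :=
  exists x y : rat, z = ratr x + ratr y * sqrt_neg d.

Definition alg_int (z : R[i]) : Prop :=
  exists p : {poly int}, p \is monic /\ root (map_poly intr p) z.

Definition in_OK (d : nat) (z : R[i]) : Prop := in_K d z /\ alg_int z.

Definition is_ideal (d : nat) (I : R[i] -> Prop) : Prop :=
  [/\ (forall z, I z -> in_OK d z),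
      I 0,
      (forall a b, I a -> I b -> I (a + b)) &
      (forall r a, in_OK d r -> I a -> I (r * a))].

Definition is_principal (d : nat) (I : R[i] -> Prop) : Prop :=
  exists a, in_OK d a /\ forall z, I z <-> exists r, in_OK d r /\ z = r * a.

Definition class_number_one (d : nat) : Prop :=
  forall I, is_ideal d I -> is_principal d I.

(* Main.v *)
Require Import Defs.
From mathcomp Require Import all_boot all_algebra.
From mathcomp Require Import all_order ring lra zify.
Import Order.TTheory GRing.Theory Num.Theory.
Local Open Scope ring_scope.

Lemma inK_ReIm (d : nat) (z : R[i]) (x y : rat) :
  z = ratr x + ratr y * sqrt_neg d ->
  complex.Re z = ratr x /\ complex.Im z = ratr y * Num.sqrt (d%:R : R).
Proof.
move=> ->.
have H : forall q : rat, (ratr q : R[i]) = complex.Complex (ratr q) 0.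
  by move=> q; rewrite -(fmorph_rat (real_complex R)).
rewrite !H /sqrt_neg /=.
split; ring.
Qed.
Definition Qr (r : R) := exists q : rat, r = ratr q.
Lemma QrD a b : Qr a -> Qr b -> Qr (a + b).
Proof. by move=> [p ->] [q ->]; exists (p + q); rewrite rmorphD. Qed.
Lemma QrM a b : Qr a -> Qr b -> Qr (a * b).
Proof. by move=> [p ->] [q ->]; exists (p * q); rewrite rmorphM. Qed.
Lemma QrN a : Qr a -> Qr (- a).
Proof. by move=> [p ->]; exists (- p); rewrite rmorphN. Qed.
Lemma QrV a : Qr a -> Qr (a^-1).
Proof. by move=> [p ->]; exists (p^-1); rewrite fmorphV. Qed.
Lemma Qrn n : Qr (n%:R).
Proof. by exists n%:R; rewrite rmorph_nat. Qed.

Definition good (d : nat) (t : R) :=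
  Qr (cos t) /\ exists b, Qr b /\ sin t = b * Num.sqrt (d%:R : R).

Lemma good_atan d a b : Qr a -> Qr b -> a != 0 ->
  good d (atan (b * Num.sqrt (d%:R : R) / a) + atan (b * Num.sqrt (d%:R : R) / a)).
Proof.
move=> Qa Qb a0.
set s := Num.sqrt (d%:R : R).
have hs : s ^+ 2 = d%:R by rewrite sqr_sqrtr // ler0n.
set r := b * s / a.
have hc : cos (atan r) = (Num.sqrt (1 + r * r))^-1.
  by rewrite cos_atan RdivE RsqrtE /Rsqr mul1r.
have hsn : sin (atan r) = r / (Num.sqrt (1 + r * r)).
  by rewrite sin_atan RdivE RsqrtE /Rsqr.
set S := Num.sqrt (1 + r * r) in hc hsn.
have hS2 : S ^+ 2 = 1 + r * r by rewrite sqr_sqrtr //; nra.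
have S0 : S != 0.
  by apply/eqP => S0; move: hS2; rewrite S0 expr0n /=; nra.
have hD : a * a + b * b * d%:R != 0.
  have : 0 <= b * b * d%:R by rewrite mulr_ge0 ?ler0n // -expr2 sqr_ge0.
  have : 0 < a * a by rewrite lt_def mulf_neq0 //= -expr2 sqr_ge0.
  move=> h1 h2; apply/eqP => h3; lra.
have hr2 : r * r = b * b * d%:R / (a * a).
  rewrite /r -hs; field; exact: a0.
split.
  rewrite cosD hc hsn.
  have -> : S^-1 * S^-1 - r / S * (r / S) = (1 - r * r) / S ^+ 2 by field.
  rewrite hS2 hr2.
  have -> : (1 - b * b * d%:R / (a * a)) / (1 + b * b * d%:R / (a * a))
     = (a * a - b * b * d%:R) / (a * a + b * b * d%:R).
    by field; rewrite a0 hD.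
  apply: QrM; last apply: QrV; (apply: QrD; [apply: QrM => // | ]);
    rewrite ?mulrN; try apply: QrN; repeat apply: QrM => //; exact: Qrn.
exists (2 * a * b / (a * a + b * b * d%:R)); split.
  apply: QrM; last by apply: QrV; apply: QrD; [apply: QrM|repeat apply: QrM; rewrite //; exact: Qrn].
  repeat apply: QrM => //; exact: Qrn.
rewrite sinD hc hsn.
have -> : r / S * S^-1 + S^-1 * (r / S) = 2 * r / S ^+ 2 by field.
rewrite hS2 hr2 /r.
rewrite /s; by field; rewrite a0 hD.
Qed.
Lemma good0 d : good d 0.
Proof.
split; first by rewrite cos_0; exists 1; rewrite rmorph1.
by exists 0; split; [exists 0; rewrite rmorph0 | rewrite sin_0 mul0r].
Qed.

Lemma goodD d a b : good d a -> good d b -> good d (a + b)%R.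
Proof.
move=> [Ca [ba [Qba Sa]]] [Cb [bb [Qbb Sb]]].
have hs : Num.sqrt (d%:R : R) ^+ 2 = d%:R by rewrite sqr_sqrtr // ler0n.
split.
  rewrite cosD Sa Sb.
  have -> : cos a * cos b - ba * Num.sqrt d%:R * (bb * Num.sqrt d%:R)
     = cos a * cos b - ba * bb * (Num.sqrt (d%:R : R) ^+ 2) by ring.
  rewrite hs; apply: QrD; first exact: QrM.
  by apply: QrN; apply: QrM; [apply: QrM|apply: Qrn].
exists (ba * cos b + cos a * bb); split.
  by apply: QrD; apply: QrM.
rewrite sinD Sa Sb; ring.
Qed.

Lemma goodN d a : good d a -> good d (- a)%R.
Proof.
move=> [Ca [ba [Qba Sa]]]; split; first by rewrite cos_neg.
exists (- ba); split; first exact: QrN.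
by rewrite sin_neg Sa mulNr.
Qed.

Lemma good_mulz d (m : int) a : good d a -> good d (m%:~R * a)%R.
Proof.
move=> ga.
have hn : forall n : nat, good d (n%:R * a)%R.
  elim=> [|n IH].
    by rewrite mul0r; exact: good0.
  by rewrite -natr1 mulrDl mul1r; apply: goodD.
case: m => n; first exact: hn.
by rewrite NegzE mulrNz mulNr; apply: goodN; exact: hn.
Qed.

Lemma good_sum d l (m : 'I_l -> int) (t : 'I_l -> R) :
  (forall j, good d (t j)) -> good d (\sum_(j < l) (m j)%:~R * t j)%R.
Proof.
move=> h; apply: (big_ind (good d)); [exact: good0 | exact: goodD |].
by move=> j _; apply: good_mulz.
Qed.

Fixpoint Dseq (u v : int) (m : nat) : int * int :=
  match m with
  | 0 => (2, u)
  | m'.+1 => let ab := Dseq u v m' in (ab.2, u * ab.2 - v * v * ab.1)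
  end.

Lemma natSx (k : nat) (x : R) : (k.+1)%:R * x = k%:R * x + x.
Proof. by rewrite -natr1 mulrDl mul1r. Qed.

Lemma cos_rec (A x : R) : cos (A + x)%R = 2 * cos x * cos A - cos (A - x)%R.
Proof.
rewrite cosD (cosD A (- x)) cos_neg sin_neg; rewrite ?RmultE ?RminusE ?RplusE ?RoppE; ring.
Qed.

Lemma niven (x : R) (n : nat) (p : rat) : (0 < n)%N ->
  cos (n%:R * x)%R = 1 -> cos x = ratr p -> exists e : int, 2 * p = e%:~R.
Proof.
move=> n0 hcn hcx.
set c := 2 * p. set u := numq c. set v := denq c.
have v0 : (v%:~R : R) != 0 by rewrite intr_eq0 denq_neq0.
have hu : (u%:~R : R) = v%:~R * (2 * cos x).
  have h : (u%:~R : rat) = c * v%:~R by rewrite numqE.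
  have h2 : (ratr (u%:~R) : R) = ratr (c * v%:~R) by rewrite h.
  rewrite rmorphM !rmorph_int in h2; rewrite h2.
  by rewrite hcx /c rmorphM rmorph_nat mulrC.
have C1 : forall m, ((Dseq u v m).1%:~R : R) = (v%:~R) ^+ m * (2 * cos (m%:R * x)%R) /\
                    ((Dseq u v m).2%:~R : R) = (v%:~R) ^+ m.+1 * (2 * cos (m.+1%:R * x)%R).
  elim=> [|m [IH1 IH2]] /=.
    rewrite expr0 mul0r cos_0 mul1r expr1 mul1r hu mulr1; split=> //.
  split; first exact: IH2.
  rewrite intrB !intrM IH1 IH2 hu (natSx m.+1) cos_rec.
  have -> : (m.+1%:R * x - x = m%:R * x)%R by rewrite natSx addrK.
  rewrite !exprS; ring.
have C2 : forall m, (v %| (Dseq u v m).2 - u ^+ m.+1)%Z.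
  elim=> [|m IH] /=; first by rewrite expr1 subrr dvdz0.
  have -> : u * (Dseq u v m).2 - v * v * (Dseq u v m).1 - u ^+ m.+2
     = u * ((Dseq u v m).2 - u ^+ m.+1) - v * (v * (Dseq u v m).1).
    by rewrite exprS; ring.
  by apply: rpredB; [apply: dvdz_mull | apply: dvdz_mulr; exact: dvdzz].
case: n n0 hcn => // n' _ hcn.
have E : (Dseq u v n').2 = v ^+ n'.+1 * 2.
  apply: (@intr_inj R); rewrite (proj2 (C1 n')) hcn intrM rmorphXn mulr1.
  by [].
have hdv : (v %| u ^+ n'.+1)%Z.
  have := C2 n'; rewrite E => h.
  have h2 : (v %| v ^+ n'.+1 * 2)%Z by apply: dvdz_mulr; apply: dvdz_exp.
  have -> : u ^+ n'.+1 = v ^+ n'.+1 * 2 - (v ^+ n'.+1 * 2 - u ^+ n'.+1) by ring.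
  exact: rpredB.
have v1 : v = 1.
  move: hdv; rewrite dvdzE abszX => hdv.
  have cop : coprime (`|u| ^ n'.+1) `|v| by apply: coprimeXl; exact: coprime_num_den.
  move: cop; rewrite /coprime (gcdn_idPr hdv) => /eqP hv.
  have : 0 < v by exact: denq_gt0.
  by case: (v) hv => // k /= ->.
exists u; have := numqE c; rewrite -/u -/v v1 mulr1 => ->; done.
Qed.

Lemma natL1 (a b d : nat) : coprime a b -> (a ^ 2 * d = b ^ 2)%N -> squarefree d -> d = 1%N.
Proof.
move=> cop E hsq.
have h1 : (a ^ 2 %| b ^ 2)%N by rewrite -E dvdn_mulr.
have cop2 : coprime (b ^ 2) (a ^ 2) by rewrite coprime_sym coprimeXl // coprimeXr.
have a2 : (a ^ 2 = 1)%N by move: cop2; rewrite /coprime (gcdn_idPr h1) => /eqP.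
rewrite a2 mul1n -mulnn in E.
have : (b * b %| d)%N by rewrite E.
by move=> /hsq b1; rewrite E b1.
Qed.

Lemma natL2 (a b d : nat) : coprime a b -> (4 * a ^ 2 * d = 3 * b ^ 2)%N -> squarefree d -> d = 3%N.
Proof.
move=> cop E hsq.
have cop2 : coprime (a ^ 2) (b ^ 2) by rewrite coprimeXl // coprimeXr.
have h1 : (a ^ 2 %| 3 * b ^ 2)%N by rewrite -E mulnC mulnA dvdn_mull.
rewrite Gauss_dvdl // in h1.
have : (a ^ 2 <= 3)%N by apply: dvdn_leq.
move=> ha.
have a1 : a = 1%N.
  have : (a <= 1)%N by nia.
  rewrite leq_eqVlt ltnS leqn0 => /orP[/eqP //|/eqP a0].
  rewrite a0 in cop E. move: cop; rewrite /coprime gcd0n => /eqP b1.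
  by move: E; rewrite b1.
rewrite a1 in E.
have Eb := divn_eq b 2.
have r2 : (b %% 2 < 2)%N by rewrite ltn_mod.
set w := (b %/ 2)%N in Eb. set r := (b %% 2)%N in Eb r2.
have r0 : r = 0%N.
  case: r Eb r2 => [|[|]] //= Eb _.
  exfalso; rewrite Eb in E; nia.
rewrite r0 addn0 in Eb; rewrite Eb in E.
have Ed : d = (3 * (w * w))%N by nia.
have : (w * w %| d)%N by rewrite Ed dvdn_mull.
by move=> /hsq w1; rewrite Ed w1.
Qed.

Lemma rat_to_nat (q : rat) (d c1 c2 : nat) :
  (c1%:R * q ^+ 2 * d%:R = c2%:R :> rat) ->
  (c1 * `|numq q| ^ 2 * d = c2 * `|denq q| ^ 2)%N.
Proof.
move=> h.
set a := numq q; set b := denq q.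
have E : (c1%:Z * (a * a) * d%:Z = c2%:Z * (b * b) :> int).
  apply: (@intr_inj rat).
  rewrite !intrM numqE -!pmulrn.
  rewrite -h; ring.
have := congr1 absz E; rewrite !abszM /= !mulnn.
done.
Qed.

Lemma ratL1 (q : rat) (d : nat) : squarefree d -> q ^+ 2 * d%:R = 1 -> d = 1%N.
Proof.
move=> hsq h; apply: (natL1 `|numq q| `|denq q|) => //.
  exact: coprime_num_den.
have := @rat_to_nat q d 1 1; rewrite !mul1n; apply; rewrite mul1r h //.
Qed.

Lemma ratL2 (q : rat) (d : nat) : squarefree d -> 4%:R * q ^+ 2 * d%:R = 3%:R -> d = 3%N.
Proof.
move=> hsq h; apply: (natL2 `|numq q| `|denq q|) => //.
  exact: coprime_num_den.
exact: rat_to_nat.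
Qed.

Lemma IZR_int (z : BinNums.Z) : exists j : int, IZR z = j%:~R.
Proof.
case: z => [|p|p].
- by exists 0.
- by exists (nat_of_pos p)%:Z; rewrite IZRposE INRE.
- exists (- (nat_of_pos p)%:Z); rewrite mulrNz.
  have -> : IZR (BinNums.Zneg p) = - IZR (BinNums.Zpos p) by [].
  by rewrite IZRposE INRE.
Qed.

Lemma sin0_int (y : R) : sin y = 0 -> exists j : int, y = j%:~R * PI.
Proof.
move=> /sin_eq_0_0 [z ->]; have [j ->] := IZR_int z; by exists j.
Qed.

Lemma cos0_int (y : R) : cos y = 0 -> exists j : int, y = j%:~R * PI + PI / 2%:R.
Proof.
move=> /cos_eq_0_0 [z ->]; have [j ->] := IZR_int z; by exists j.
Qed.

Lemma cos_2kpi (k : int) : cos (k%:~R * (2 * PI))%R = 1.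
Proof.
have hn : forall m : nat, cos (m%:R * (2 * PI))%R = 1.
  elim=> [|m IH]; first by rewrite mul0r cos_0.
  rewrite -natr1 mulrDl mul1r cosD IH.
  have -> : cos (2 * PI)%R = 1 by exact: cos_2PI.
  have -> : sin (2 * PI)%R = 0 by exact: sin_2PI.
  by rewrite mulr1 mulr0 subr0.
case: k => m; first exact: hn.
by rewrite NegzE mulrNz mulNr cos_neg hn.
Qed.

Lemma pick (th : R) (z : int) (M c : nat) : (0 < M)%N -> (0 < c)%N ->
  (M%:R * th = z%:~R * PI)%R -> th = (z * c%:Z)%:~R * PI / (M * c)%:R.
Proof.
move=> M0 c0 h.
have hM : (M%:R : R) != 0 by rewrite pnatr_eq0 -lt0n.
have hc : (c%:R : R) != 0 by rewrite pnatr_eq0 -lt0n.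
rewrite intrM natrM -pmulrn.
have -> : th = z%:~R * PI / M%:R by rewrite -h; field.
by field; rewrite hM hc.
Qed.

Lemma cos3 (a : R) : cos (a + a + a)%R = cos a * cos a * cos a - 3%:R * (sin a * sin a) * cos a.
Proof. rewrite !cosD !sinD ?RmultE ?RminusE ?RplusE; ring. Qed.

Theorem corollary4p3 (d : nat) (hd : (0 < d)%N) (hsq : squarefree d)
    (hcl : class_number_one d)
    (l : nat) (z : 'I_l -> R[i]) (m : 'I_l -> int) (k : int) (n : nat)
    (hn : (1 <= n)%N)
    (hz : forall j, in_OK d (z j))
    (hre : forall j, complex.Re (z j) != 0)
    (heq : (k%:~R * PI / n%:R : R) =
           \sum_(j < l) (m j)%:~R * atan (complex.Im (z j) / complex.Re (z j))) :
  exists j : int,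
    (k%:~R * PI / n%:R : R) =
      j%:~R * PI / (if d == 1%N then 4 else if d == 3%N then 6 else 2).
Proof.
set s := Num.sqrt (d%:R : R).
have hs2 : s ^+ 2 = d%:R by rewrite sqr_sqrtr // ler0n.
pose t j := atan (complex.Im (z j) / complex.Re (z j)).
have gt : forall j, good d (t j + t j)%R.
  move=> j; have [[x [y hxy]] _] := hz j.
  have [hR hI] := @inK_ReIm d _ _ _ hxy.
  have := hre j; rewrite /t hI hR => h0.
  by apply: good_atan => //; [exists x | exists y].
set th := (k%:~R * PI / n%:R : R).
have hphi : good d (th + th)%R.
  have -> : (th + th = \sum_(j < l) (m j)%:~R * (t j + t j))%R.
    rewrite /th heq -big_split /=; apply: eq_bigr => j _; rewrite /t; ring.
  exact: good_sum.
set phi := (th + th)%R in hphi.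
have [[p hp] [b [[q hb] hsin]]] := hphi.
rewrite hb in hsin.
have hn0 : (n%:R : R) != 0 by rewrite pnatr_eq0 -lt0n.
have hcn : cos (n%:R * phi)%R = 1.
  have -> : (n%:R * phi = k%:~R * (2 * PI))%R by rewrite /phi /th -?RmultE -?RdivE ?RmultE ?RdivE; field.
  exact: cos_2kpi.
have [e he] := @niven phi n p hn hcn hp.
have hce : 2 * cos phi = e%:~R.
  by rewrite hp -(rmorph_nat (@ratr R) 2) -rmorphM he rmorph_int.
have pyth : sin phi * sin phi + cos phi * cos phi = 1 by exact: (sin2_cos2 phi).
have hss : sin phi * sin phi = ratr q ^+ 2 * d%:R by rewrite hsin -/s -hs2; ring.
have [hb1 hb2] : -1 <= cos phi /\ cos phi <= 1.
  by have [/RleP h1 /RleP h2] := COS_bound phi.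
have : ((-2)%:~R : R) <= e%:~R /\ (e%:~R : R) <= 2%:~R.
  rewrite -hce; split; rewrite ?mulrNz; lra.
rewrite !ler_int => -[he1 he2].
have hphi2 : forall J : int, (2%:R * th = J%:~R * PI)%R ->
  exists j : int, th = j%:~R * PI / (if d == 1%N then 4 else if d == 3%N then 6 else 2).
  move=> J hJ.
  case: ifP => _; first by exists (J * 2%:Z); exact: pick hJ.
  case: ifP => _; first by exists (J * 3%:Z); exact: pick hJ.
  by exists (J * 1%:Z); exact: pick hJ.
have : e = -2 \/ e = -1 \/ e = 0 \/ e = 1 \/ e = 2 by lia.
have toQ : forall c1 c2 : nat, c1%:R * (sin phi * sin phi) = c2%:R ->
    c1%:R * q ^+ 2 * d%:R = c2%:R.
  move=> c1 c2; rewrite hss => h.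
  apply: (@fmorph_inj _ _ (@ratr R)).
  by rewrite !rmorphM !rmorph_nat -h expr2 !mulrA.
move=> [E|[E|[E|[E|E]]]]; rewrite E ?intrN ?mulrz_nat ?mulr0z ?mulr1z in hce.
-
  have hc : cos phi = (if e == 2 then 1 else -1) by rewrite E /=; lra.
  have h0 : sin phi * sin phi = 0 by rewrite hc E /= in pyth; lra.
  have : sin phi = 0 by move/eqP: h0; rewrite mulf_eq0 orbb => /eqP.
  move=> /sin0_int [J hJ]; apply: (hphi2 J); rewrite -hJ /phi; ring.
-
  have hc : cos phi = - 2%:R^-1 by lra.
  have hS : sin phi * sin phi = 3%:R / 4%:R by rewrite hc in pyth; lra.
  have d3 : d = 3%N.
    apply: (@ratL2 q d hsq); apply: toQ; rewrite hS; lra.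
  have h3 : sin (phi + phi + phi)%R = 0.
    have hC : cos (phi + phi + phi)%R = cos phi * cos phi * cos phi - 3%:R * (sin phi * sin phi) * cos phi.
      exact: cos3.
    have hC1 : cos (phi + phi + phi)%R = 1 by rewrite hC hS hc; field.
    have py3 := sin2_cos2 (phi + phi + phi)%R.
    have : sin (phi + phi + phi)%R * sin (phi + phi + phi)%R = 0.
      rewrite /Rsqr hC1 ?RmultE ?RplusE ?R1E in py3; lra.
    by move/eqP; rewrite mulf_eq0 orbb => /eqP.
  move: h3 => /sin0_int [J hJ].
  rewrite d3 /=; exists (J * 1%:Z).
  apply: (@pick th J 6 1) => //; rewrite -hJ /phi; ring.
-
  have hc : cos phi = 0 by lra.
  have d1 : d = 1%N.
    apply: (@ratL1 q d hsq); rewrite -(mul1r (q ^+ 2)).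
    by apply: (toQ 1 1); rewrite hc in pyth; lra.
  move: hc => /cos0_int [J hJ].
  rewrite d1 /=; exists ((2 * J + 1) * 1%:Z).
  apply: (@pick th (2 * J + 1) 4 1) => //.
  have -> : (4%:R * th = 2%:R * phi)%R by rewrite /phi; ring.
  by rewrite hJ intrD intrM; field.
-
  have hc : cos phi = 2%:R^-1 by lra.
  have hS : sin phi * sin phi = 3%:R / 4%:R by rewrite hc in pyth; lra.
  have d3 : d = 3%N.
    apply: (@ratL2 q d hsq); apply: toQ; rewrite hS; lra.
  have h3 : sin (phi + phi + phi)%R = 0.
    have hC : cos (phi + phi + phi)%R = cos phi * cos phi * cos phi - 3%:R * (sin phi * sin phi) * cos phi.
      exact: cos3.
    have hC1 : cos (phi + phi + phi)%R = -1 by rewrite hC hS hc; field.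
    have py3 := sin2_cos2 (phi + phi + phi)%R.
    have : sin (phi + phi + phi)%R * sin (phi + phi + phi)%R = 0.
      rewrite /Rsqr hC1 ?RmultE ?RplusE ?R1E in py3; lra.
    by move/eqP; rewrite mulf_eq0 orbb => /eqP.
  move: h3 => /sin0_int [J hJ].
  rewrite d3 /=; exists (J * 1%:Z).
  apply: (@pick th J 6 1) => //; rewrite -hJ /phi; ring.
-
  have hc : cos phi = (if e == 2 then 1 else -1) by rewrite E /=; lra.
  have h0 : sin phi * sin phi = 0 by rewrite hc E /= in pyth; lra.
  have : sin phi = 0 by move/eqP: h0; rewrite mulf_eq0 orbb => /eqP.
  move=> /sin0_int [J hJ]; apply: (hphi2 J); rewrite -hJ /phi; ring.
Qed.
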